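(* For every integer $n \ge 5$, $\gamma_R(P(n,2)) \le \left\lceil \frac{8n}{7}\right\rceil$.
   Context: For integers $n \ge 3$ and $1 \le k < n/2$, the generalized Petersen graph $P(n,k)$ has vertex set $\{v_i, u_i : 0 \le i \le n-1\}$ and edge set $\{v_iv_{i+1},\ v_iu_i,\ u_iu_{i+k} : 0 \le i \le n-1\}$, with subscripts taken modulo $n$. A Roman domination function (RDF) of a graph $G$ is a function $f: V(G)\to\{0,1,2\}$ such that every vertex $u$ with $f(u)=0$ is adjacent to at least one vertex $v$ with $f(v)=2$. Its weight is $\sum_{u\in V(G)} f(u)$. The Roman domination number $\gamma_R(G)$ is the minimum weight of an RDF of $G$. *)

(* Defs.v *)
From mathcomp Require Import all_boot.
Set Implicit Arguments. Unset Strict Implicit. Unset Printing Implicit Defensive.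

(* Generalized Petersen graph P(n,k): vertices 'I_n + 'I_n,
   inl i = v_i (outer), inr i = u_i (inner).
   Edges: v_i v_{i+1}, v_i u_i, u_i u_{i+k}  (indices mod n). *)
Definition gp_adj (n k : nat) (x y : 'I_n + 'I_n) : bool :=
  match x, y with
  | inl i, inl j => (j == (i + 1) %% n :> nat) || (i == (j + 1) %% n :> nat)
  | inl i, inr j => i == j :> nat
  | inr i, inl j => i == j :> nat
  | inr i, inr j => (j == (i + k) %% n :> nat) || (i == (j + k) %% n :> nat)
  end.

Definition is_RDF (T : finType) (adj : rel T) (f : {ffun T -> 'I_3}) : bool :=
  [forall u, (val (f u) == 0) ==> [exists v, adj u v && (val (f v) == 2)]].

Definition RDF_weight (T : finType) (f : {ffun T -> 'I_3}) : nat :=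
  \sum_(u : T) val (f u).

(* Roman domination number: minimum weight of an RDF.  The default value
   2*|T| is the weight of the constant-2 function, which is always an RDF,
   so it does not affect the minimum. *)
Definition gammaR (T : finType) (adj : rel T) : nat :=
  \big[minn/(#|T|).*2]_(f : {ffun T -> 'I_3} | is_RDF adj f) RDF_weight f.
Arguments gp_adj n k x y : clear implicits.

(* Main.v *)
Require Import Defs.
From mathcomp Require Import all_boot.
From Stdlib Require Import Lia.

Ltac slia :=
  repeat match goal with
  | H : is_true (_ <= _) |- _ => apply (elimT leP) in H
  | H : (_ <= _) = false |- _ => apply negbT in H
  | H : is_true (~~ (_ <= _)) |- _ => rewrite -ltnNge in H
  | H : is_true (_ == _) |- _ => apply (elimT eqP) in H
  end; try (apply/leP); try match goal with |- is_true (_ == _) => apply/eqP end; unfold addn, subn, muln in *; lia.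

Definition nb n i d := (i + n + d - 2) %% n.

Definition mkf n (c : nat -> nat * nat) : {ffun 'I_n + 'I_n -> 'I_3} :=
  [ffun x : 'I_n + 'I_n => match x with inl i => inord (c i).1 | inr i => inord (c i).2 end].

Definition locg (g : nat -> nat * nat) : bool :=
  (((g 2).1 != 0) || ((g 1).1 == 2) || ((g 3).1 == 2) || ((g 2).2 == 2)) &&
  (((g 2).2 != 0) || ((g 2).1 == 2) || ((g 0).2 == 2) || ((g 4).2 == 2)).

Definition locok n c i := locg (fun d => c (nb n i d)).

Lemma nb2 n i : i < n -> nb n i 2 = i.
Proof. move=> H; rewrite /nb. have -> : i + n + 2 - 2 = i + n by slia.
by rewrite modnDr modn_small. Qed.

Lemma rdf_loc n c : 2 <= n -> (forall i, ((c i).1 <= 2) && ((c i).2 <= 2)) ->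
  (forall i, i < n -> locok n c i) -> is_RDF (gp_adj n 2) (mkf n c).
Proof.
move=> n2 Hb Hl. have n0 : 0 < n by slia.
apply/forallP => x; apply/implyP.
have val3 : forall m, m <= 2 -> val (inord m : 'I_3) = m.
  by move=> m Hm; exact: inordK.
case: x => i; rewrite ffunE /=; move: (Hl _ (ltn_ord i)) (Hb i);
rewrite /locok /locg nb2 //; case/andP => L1 L2; case/andP => B1 B2.
- rewrite val3 // => /eqP c0; rewrite c0 /= in L1.
  case/orP: L1 => [/orP [H|H] | H].
  + apply/existsP; exists (inl (Ordinal (ltn_pmod (i + n + 1 - 2) n0))).
    rewrite /= ffunE val3; last by move/eqP: H => ->.
    apply/andP; split; last exact: H.
    apply/orP; right; apply/eqP; rewrite modnDml.
    have -> : i + n + 1 - 2 + 1 = i + n by slia.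
    by rewrite modnDr modn_small.
  + apply/existsP; exists (inl (Ordinal (ltn_pmod (i + n + 3 - 2) n0))).
    rewrite /= ffunE val3; last by move/eqP: H => ->.
    apply/andP; split; last exact: H.
    apply/orP; left; apply/eqP.
    have -> : i + n + 3 - 2 = i + 1 + n by slia.
    by rewrite modnDr.
  + apply/existsP; exists (inr i). by rewrite /= ffunE eqxx /= val3 // (eqP H).
- rewrite val3 // => /eqP c0; rewrite c0 /= in L2.
  case/orP: L2 => [/orP [H|H] | H].
  + apply/existsP; exists (inl i). by rewrite /= ffunE eqxx /= val3 // (eqP H).
  + apply/existsP; exists (inr (Ordinal (ltn_pmod (i + n + 0 - 2) n0))).
    rewrite /= ffunE val3; last by move/eqP: H => ->.
    apply/andP; split; last exact: H.
    apply/orP; right; apply/eqP; rewrite modnDml.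
    have -> : i + n + 0 - 2 + 2 = i + n by slia.
    by rewrite modnDr modn_small.
  + apply/existsP; exists (inr (Ordinal (ltn_pmod (i + n + 4 - 2) n0))).
    rewrite /= ffunE val3; last by move/eqP: H => ->.
    apply/andP; split; last exact: H.
    apply/orP; left; apply/eqP.
    have -> : i + n + 4 - 2 = i + 2 + n by slia.
    by rewrite modnDr.
Qed.

Lemma gammaR_le (T : finType) (adj : rel T) f :
  is_RDF adj f -> gammaR adj <= RDF_weight f.
Proof.
rewrite /gammaR => Hf.
have : f \in index_enum {ffun T -> 'I_3} by rewrite mem_index_enum.
elim: (index_enum _) => [//|g s IH]; rewrite inE big_cons.
case/orP => [/eqP <-|/IH H]; first by rewrite Hf geq_minl.
case: ifP => _ //; by rewrite geq_min H orbT.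
Qed.

Lemma weight_mkf n c : (forall i, ((c i).1 <= 2) && ((c i).2 <= 2)) ->
  RDF_weight (mkf n c) = \sum_(0 <= i < n) ((c i).1 + (c i).2).
Proof.
move=> Hb; rewrite /RDF_weight big_sumType /= big_mkord big_split /=.
congr (_ + _); apply: eq_bigr => i _; rewrite ffunE; apply: inordK;
  by case/andP: (Hb i).
Qed.

Definition Bl : seq (nat * nat) := [:: (0,0);(1,0);(0,2);(0,2);(1,0);(0,0);(2,0)].

Definition cval k (T : seq (nat * nat)) i :=
  if i < 7 * k then nth (0,0) Bl (i %% 7) else nth (0,0) T (i - 7 * k).

Definition Xv (T : seq (nat * nat)) q :=
  if q < 21 then nth (0,0) Bl (q %% 7)
  else if q < 21 + size T then nth (0,0) T (q - 21)
  else nth (0,0) Bl ((q - 21 - size T) %% 7).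

Lemma modn3 m n : m < 3 * n ->
  m %% n = if m < n then m else if m < 2 * n then m - n else m - 2 * n.
Proof.
move=> H; case: ifP => h1; first by rewrite modn_small.
case: ifP => h2.
  have -> : m = 1 * n + (m - n) by slia.
  rewrite modnMDl modn_small; slia.
have -> : m = 2 * n + (m - 2 * n) by slia.
rewrite modnMDl modn_small; slia.
Qed.

Lemma mod7 u v x y : x + 7 * u = y + 7 * v -> x %% 7 = y %% 7.
Proof.
move=> H; rewrite -(modnMDl u x) -(modnMDl v y); congr (_ %% _); slia.
Qed.

Ltac br := first [ exfalso; slia | congr (nth _ _ _); slia
                 | congr (nth _ _ (_ %% 7)); slia ].

Lemma window k T i : 1 <= k -> 2 <= size T -> i < 7 * k + size T ->
  exists2 p, 2 <= p < 21 + size T + 2 &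
    forall d, d <= 4 -> cval k T (nb (7 * k + size T) i d) = Xv T (p + d - 2).
Proof.
move=> k1 L2 iN.
have hm : forall d, d <= 4 -> i + (7 * k + size T) + d - 2 < 3 * (7 * k + size T).
  move=> d hd; slia.
case: (ltnP i 2) => [i2|i2].
  exists (21 + size T + i); first (apply/andP; split; slia).
  move=> d hd; rewrite /nb modn3 ?hm //.
  case: ifP => ?; [|case: ifP => ?]; rewrite /cval /Xv;
  by repeat (case: ifP => ?); br.
case: (ltnP (i + 2) (7 * k)) => [ik|ik].
  have hdiv := divn_eq i 7. have hlt : i %% 7 < 7 by rewrite ltn_mod.
  exists (7 + i %% 7); first (apply/andP; split; slia).
  move=> d hd; rewrite /nb modn3 ?hm //.
  case: ifP => ?; [|case: ifP => ?]; rewrite /cval /Xv;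
  repeat (case: ifP => ?); first [br | congr (nth _ _ _); apply: (mod7 1 (i %/ 7)); slia].
exists (21 + i - 7 * k); first (apply/andP; split; slia).
move=> d hd; rewrite /nb modn3 ?hm //.
case: ifP => ?; [|case: ifP => ?]; rewrite /cval /Xv;
repeat (case: ifP => ?); first [br | congr (nth _ _ _); apply: (mod7 3 k); slia].
Qed.

Definition w (x : nat * nat) := x.1 + x.2.
Definition sumw (S : seq (nat * nat)) := sumn (map w S).

Lemma sum_nth S : \sum_(0 <= i < size S) w (nth (0,0) S i) = sumw S.
Proof.
elim: S => [|x S IH]; first by rewrite big_geq.
by rewrite /= big_nat_recl //= IH.
Qed.

Lemma sum_shift a L F : \sum_(a <= i < a + L) F i = \sum_(0 <= i < L) F (i + a).
Proof. by rewrite -{1}(add0n a) big_addn addKn. Qed.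

Lemma sumB m : \sum_(0 <= i < 7 * m) w (nth (0,0) Bl (i %% 7)) = 8 * m.
Proof.
elim: m => [|m IH]; first by rewrite big_geq.
rewrite mulnS addnC (big_cat_nat (leq0n (7 * m)) (leq_addr 7 _)) /= IH.
rewrite sum_shift.
have -> : \sum_(0 <= i < 7) w (nth (0, 0) Bl ((i + 7 * m) %% 7)) =
          \sum_(0 <= i < 7) w (nth (0, 0) Bl i).
  apply: eq_big_nat => i /andP [_ hi].
  by rewrite addnC mulnC modnMDl modn_small.
rewrite (_ : 7 = size Bl) // sum_nth /=; rewrite (_ : sumw Bl = 8) //; slia.
Qed.

Lemma sum_cval k T :
  \sum_(0 <= i < 7 * k + size T) w (cval k T i) = 8 * k + sumw T.
Proof.
rewrite (big_cat_nat (leq0n (7 * k)) (leq_addr _ _)) /=.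
rewrite -sumB sum_shift -sum_nth; congr (_ + _).
  by apply: eq_big_nat => i /andP [_ hi]; rewrite /cval hi.
apply: eq_big_nat => i _; rewrite /cval.
have -> : (i + 7 * k < 7 * k) = false by slia.
by rewrite addnK.
Qed.

Definition bounded (S : seq (nat * nat)) :=
  all (fun x : nat * nat => (x.1 <= 2) && (x.2 <= 2)) S.

Lemma bnd_nth S i : bounded S ->
  ((nth (0,0) S i).1 <= 2) && ((nth (0,0) S i).2 <= 2).
Proof.
move=> hS; case: (ltnP i (size S)) => hi; last by rewrite nth_default.
exact: (allP hS _ (mem_nth _ hi)).
Qed.

Definition Xcheck T := all (fun p => locg (fun d => Xv T (p + d - 2))) (iota 2 (21 + size T)).

Lemma big_ok k T : 1 <= k -> 2 <= size T -> bounded T -> Xcheck T ->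
  sumw T <= (8 * size T + 6) %/ 7 ->
  gammaR (gp_adj (7 * k + size T) 2) <= (8 * (7 * k + size T) + 6) %/ 7.
Proof.
move=> k1 L2 bT xT sT.
have bc : forall i, ((cval k T i).1 <= 2) && ((cval k T i).2 <= 2).
  by move=> i; rewrite /cval; case: ifP => _; apply: bnd_nth.
apply: (@leq_trans (RDF_weight (mkf (7 * k + size T) (cval k T)))).
  apply: gammaR_le; apply: rdf_loc => //; first slia.
  move=> i hi; have [p hp E] := @window k T i k1 L2 hi.
  move: (allP xT p); rewrite mem_iota.
  have -> : (2 <= p < 2 + (21 + size T)) by case/andP: hp => h1 h2; apply/andP; split; slia.
  move=> /(_ isT); rewrite /locok /locg !E //.
rewrite weight_mkf // -/w sum_cval.
have -> : 8 * (7 * k + size T) + 6 = 8 * k * 7 + (8 * size T + 6) by slia.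
by rewrite divnMDl // leq_add2l.
Qed.

Definition smallb S := bounded S &&
  all (locok (size S) (fun i => nth (0,0) S i)) (iota 0 (size S)) &&
  (sumw S <= (8 * size S + 6) %/ 7).

Lemma small_ok S : 2 <= size S -> smallb S ->
  gammaR (gp_adj (size S) 2) <= (8 * size S + 6) %/ 7.
Proof.
move=> L2 /andP [/andP [bS lS] sS].
apply: (@leq_trans (RDF_weight (mkf (size S) (fun i => nth (0,0) S i)))).
  apply: gammaR_le; apply: rdf_loc => //; first by move=> i; apply: bnd_nth.
  by move=> i hi; apply: (allP lS); rewrite mem_iota.
rewrite weight_mkf; last by move=> i; apply: bnd_nth.
by rewrite -/w sum_nth.
Qed.

Definition Tl (r : nat) : seq (nat * nat) :=
  match r with
  | 0 => [:: (0,0);(1,0);(0,2);(0,2);(1,0);(0,0);(2,0)]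
  | 1 => [:: (0,0);(1,0);(0,2);(0,2);(0,0);(2,0);(0,1);(2,0)]
  | 2 => [:: (0,0);(1,0);(0,2);(0,2);(0,0);(2,0);(0,1);(0,1);(2,0)]
  | 3 => [:: (0,0);(1,0);(0,2);(0,2);(1,0);(0,0);(2,0);(0,1);(0,1);(2,0)]
  | 4 => [:: (0,0);(1,0);(0,2);(0,2);(0,0);(2,0);(0,0);(0,2);(0,2);(0,0);(2,0)]
  | 5 => [:: (0,0);(1,0);(0,2);(0,2);(0,0);(2,0);(0,0);(1,0);(0,2);(0,2);(0,0);(2,0)]
  | _ => [:: (0,0);(1,0);(0,2);(0,2);(0,0);(2,0);(0,0);(1,0);(0,2);(0,2);(1,0);(0,0);(2,0)]
  end.

Definition S5 : seq (nat * nat) := [:: (0,0);(0,0);(2,0);(0,2);(2,0)].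
Definition S6 : seq (nat * nat) := [:: (0,0);(0,2);(0,2);(1,0);(0,0);(2,0)].

Definition tailb r := (size (Tl r) == r + 7) && bounded (Tl r) && Xcheck (Tl r) &&
  (sumw (Tl r) <= (8 * size (Tl r) + 6) %/ 7).

Lemma tailb_ok r : r < 7 -> tailb r.
Proof.
by case: r => [|[|[|[|[|[|[|//]]]]]]] _; vm_compute.
Qed.

Theorem lemma2p1 (n : nat) : 5 <= n ->
  gammaR (gp_adj n 2) <= (8 * n + 6) %/ 7.
Proof.
move=> n5.
case: (ltnP n 14) => n14.
  move: n5 n14.
  case: n => [|[|[|[|[|[|[|[|[|[|[|[|[|[|n]]]]]]]]]]]]]] // _ _.
  - by apply: (small_ok S5); vm_compute.
  - by apply: (small_ok S6); vm_compute.
  - by apply: (small_ok (Tl 0)); vm_compute.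
  - by apply: (small_ok (Tl 1)); vm_compute.
  - by apply: (small_ok (Tl 2)); vm_compute.
  - by apply: (small_ok (Tl 3)); vm_compute.
  - by apply: (small_ok (Tl 4)); vm_compute.
  - by apply: (small_ok (Tl 5)); vm_compute.
  - by apply: (small_ok (Tl 6)); vm_compute.
have hr : n %% 7 < 7 by rewrite ltn_mod.
have /andP [/andP [/andP [/eqP hs bT] xT] sT] := @tailb_ok (n %% 7) hr.
have hdiv := divn_eq n 7.
have hn : n = 7 * (n %/ 7 - 1) + size (Tl (n %% 7)) by rewrite hs; slia.
rewrite hn; apply: big_ok; [slia | rewrite hs; slia | exact bT | exact xT | exact sT].
Qed.
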